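(* Let $q$ be a prime power and let $X \subset \mathbb{P}^2$ be the Hermitian curve over $\mathbb{F}_{q^2}$, the projective closure of the affine curve $x^{q+1} = y^q + y$. Let $P_0$ be its unique point at infinity, let $\rho$ be an integer with $0 \le \rho \le q^2-q-2$ and $G = \rho P_0$, let $P_1,\dots,P_n$, $n = q^3$, be the affine $\mathbb{F}_{q^2}$-rational points of $X$, and $D = P_1+\cdots+P_n$. Let $d$ be the minimum distance of the Hermitian code $C(D,G)^*$, and assume that $L(G) = H^0(\mathbb{P}^2, \mathcal{O}_{\mathbb{P}^2}(d-2))$, i.e. $L(G)$ equals the space of restrictions to $X$ of polynomials in $x,y$ of degree at most $d-2$. Let $a$ be an integer with $0 \le a \le d-3$ and let $\{P_{i_1},\ldots,P_{i_{d+a}}\}$ be the points $P_i$ with nonzero coordinate in a codeword of $C(D,G)^*$ of weight $d+a$. Then at least $d-1$ of the points $P_{i_1},\ldots,P_{i_{d+a}}$ are collinear.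
   Context: $L(G)$ is the Riemann–Roch space of rational functions $f$ on $X$ with $f=0$ or $\mathrm{div}(f)+G \ge 0$. $C(D,G) = \{(f(P_1),\dots,f(P_n)) : f \in L(G)\}$ and the Hermitian code $C(D,G)^*$ is its dual: the set of $c \in \mathbb{F}_{q^2}^n$ with $\sum_i c_i f(P_i) = 0$ for all $f \in L(G)$. Weight = number of nonzero coordinates; minimum distance = minimum weight of a nonzero codeword. *)

(* Defs.v *)
From HB Require Import structures.
From mathcomp Require Import all_boot all_order all_algebra all_field.
From mathcomp Require Import mpoly.
Set Implicit Arguments. Unset Strict Implicit. Unset Printing Implicit Defensive.
Import GRing.Theory.
Local Open Scope ring_scope.

Definition xvar : 'I_2 := ord0.
Definition yvar : 'I_2 := ord_max.

Definition hermH (F : fieldType) (q : nat) : {mpoly F[2]} :=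
  'X_xvar ^+ q.+1 - 'X_yvar ^+ q - 'X_yvar.

Definition ev (F : fieldType) (v : F * F) : 'I_2 -> F :=
  fun i => if i == xvar then v.1 else v.2.

Definition onX (F : fieldType) (q : nat) (v : F * F) : bool :=
  v.1 ^+ q.+1 == v.2 ^+ q + v.2.

(* f (a polynomial, viewed in the coordinate ring F[x,y]/(H)) lies in
   L(rho P0): f is congruent mod H to a combination of monomials x^i y^j
   of pole order i*q + j*(q+1) <= rho at P0. *)
Definition inLG (F : fieldType) (q rho : nat) (f : {mpoly F[2]}) : Prop :=
  exists g h : {mpoly F[2]}, f = g + h * hermH F q /\
    forall m, m \in msupp g -> (q * m xvar + q.+1 * m yvar <= rho)%N.

(* c (a vector indexed by the affine rational points, zero elsewhere) is in
   the Hermitian code C(D,G)^*. *)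
Definition in_dual (F : finFieldType) (q rho : nat) (c : F * F -> F) : Prop :=
  (forall v, ~~ onX q v -> c v = 0) /\
  forall f, inLG q rho f -> \sum_(v : F * F | onX q v) c v * f.@[ev v] = 0.

Definition weight (F : finFieldType) (c : F * F -> F) : nat :=
  #|[set v : F * F | c v != 0]|.

Definition supp_on_line (F : finFieldType) (c : F * F -> F) (al be ga : F)
  : {set F * F} :=
  [set v : F * F | (c v != 0) && (al * v.1 + be * v.2 + ga == 0)].

(* Main.v *)
Require Import Defs.
From HB Require Import structures.
From mathcomp Require Import all_boot all_order all_algebra all_field.
From mathcomp Require Import mpoly.
From mathcomp Require Import ring zify.
Import GRing.Theory.
Local Open Scope ring_scope.

Section S.
Variable F : fieldType.
Definition lin (al be ga : F) : {mpoly F[2]} :=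
  al *: 'X_xvar + be *: 'X_yvar + ga%:MP.

Lemma lin_ev al be ga v : (lin al be ga).@[ev v] = al * v.1 + be * v.2 + ga.
Proof. by rewrite /lin !mevalD !mevalZ !mevalXU mevalC /ev eqxx. Qed.

Lemma lin_size al be ga : (msize (lin al be ga) <= 2)%N.
Proof.
rewrite /lin; apply: leq_trans (msizeD_le _ _) _; rewrite geq_max; apply/andP; split.
  apply: leq_trans (msizeD_le _ _) _; rewrite geq_max; apply/andP; split;
  apply: leq_trans (msizeZ_le _ _) _; by rewrite msizeX mdeg1.
by rewrite msizeC; case: (_ != _).
Qed.
Variable P : F * F.
Definition dir (Q : F * F) : F * F :=
  if Q.1 == P.1 then (0, 1) else (1, (Q.2 - P.2) / (Q.1 - P.1)).

Lemma dirP Q : Q != P -> exists2 l : F, l != 0 &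
  Q.1 - P.1 = l * (dir Q).1 /\ Q.2 - P.2 = l * (dir Q).2.
Proof.
move=> nQP; rewrite /dir; case: eqP => [e1|/eqP n1] /=.
  exists (Q.2 - P.2); last by split; rewrite ?e1 ?subrr ?mulr0 ?mulr1.
  rewrite subr_eq0; apply: contra nQP => /eqP e2.
  by apply/eqP; rewrite [Q]surjective_pairing [P]surjective_pairing e1 e2.
exists (Q.1 - P.1); first by rewrite subr_eq0.
by split; rewrite ?mulr1 // mulrC divfK // subr_eq0.
Qed.

Lemma dir_det Q R : dir Q != dir R -> (dir Q).1 * (dir R).2 - (dir Q).2 * (dir R).1 != 0.
Proof.
rewrite /dir; case: ifP => _; case: ifP => _ /=; rewrite ?eqxx //;
  rewrite ?mul0r ?mul1r ?mulr1 ?mulr0 ?subr0 ?sub0r ?oppr_eq0 ?oner_eq0 //.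
rewrite subr_eq0; apply: contra => /eqP ->; by [].
Qed.

Lemma line2 Q R : Q != P -> R != P -> dir Q != dir R ->
  exists l : {mpoly F[2]}, [/\ (msize l <= 2)%N, l.@[ev Q] = 0, l.@[ev R] = 0 & l.@[ev P] != 0].
Proof.
move=> nQ nR nd.
exists (lin (R.2 - Q.2) (Q.1 - R.1) (- ((R.2 - Q.2) * Q.1 + (Q.1 - R.1) * Q.2))).
rewrite !lin_ev lin_size; split => //; first by ring.
  by ring.
have [l l0 [e1 e2]] := dirP _ nQ; have [m m0 [f1 f2]] := dirP _ nR.
have -> : (R.2 - Q.2) * P.1 + (Q.1 - R.1) * P.2 + - ((R.2 - Q.2) * Q.1 + (Q.1 - R.1) * Q.2)
  = (R.1 - P.1) * (Q.2 - P.2) - (R.2 - P.2) * (Q.1 - P.1) by ring.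
rewrite e1 e2 f1 f2.
have -> : m * (dir R).1 * (l * (dir Q).2) - m * (dir R).2 * (l * (dir Q).1)
  = - (l * m) * ((dir Q).1 * (dir R).2 - (dir Q).2 * (dir R).1) by ring.
by rewrite mulf_neq0 ?oppr_eq0 ?mulf_neq0 // dir_det.
Qed.

Lemma line1 Q : Q != P ->
  exists l : {mpoly F[2]}, [/\ (msize l <= 2)%N, l.@[ev Q] = 0 & l.@[ev P] != 0].
Proof.
move=> nQ; case: (eqVneq Q.1 P.1) => e.
  exists (lin 0 1 (- Q.2)); rewrite !lin_ev lin_size; split => //; first by ring.
  rewrite !mul0r !mul1r !add0r subr_eq0; apply: contra nQ => /eqP e2.
  by apply/eqP; rewrite [Q]surjective_pairing [P]surjective_pairing e e2.
exists (lin 1 0 (- Q.1)); rewrite !lin_ev lin_size; split => //; first by ring.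
by rewrite !mul0r !mul1r !addr0 subr_eq0 eq_sym.
Qed.
End S.

Lemma argmx (T : finType) (A : {set T}) (g : T -> nat) x : x \in A ->
  exists2 Q, Q \in A & forall V, V \in A -> (g V <= g Q)%N.
Proof. move=> xA; case: (@arg_maxnP _ x (mem A) g xA) => Q QA H; by exists Q. Qed.

Section Sep.
Variable F : finFieldType.
Variable P : F * F.
Definition cls (T : {set F * F}) Q := [set R in T | @dir _ P R == @dir _ P Q].

Lemma sep n : forall T : {set F * F}, P \notin T -> (#|T| <= 2 * n)%N ->
  (forall Q, Q \in T -> #|cls T Q| <= n)%N ->
  exists f : {mpoly F[2]}, [/\ (msize f <= n.+1)%N,
    (forall v, v \in T -> f.@[ev v] = 0) & f.@[ev P] != 0].
Proof.
have base : exists f : {mpoly F[2]}, [/\ (msize f <= 1)%N,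
    (forall v, v \in set0 -> f.@[ev v] = 0) & f.@[ev P] != 0].
  by exists 1; rewrite msize1 meval1 oner_eq0; split => // v; rewrite inE.
have mulstep : forall (f l : {mpoly F[2]}) m, (msize f <= m.+1)%N -> (msize l <= 2)%N ->
    f.@[ev P] != 0 -> l.@[ev P] != 0 -> (msize (f * l) <= m.+2)%N /\ (f * l).@[ev P] != 0.
  move=> f l m hf hl fP lP; rewrite mevalM mulf_neq0 //; split => //.
  have fn : f != 0 by apply: contraNneq fP => ->; rewrite meval0.
  have ln : l != 0 by apply: contraNneq lP => ->; rewrite meval0.
  rewrite msizeM //; move: hf hl; case: (msize f) => [|a]; case: (msize l) => [|b] //=; lia.
elim: n => [|n IH] T PT hT hc.
  have -> : T = set0 by apply/eqP; rewrite -cards_eq0; move: hT; rewrite muln0 leqn0.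
  case: base => f [h1 h2 h3]; by exists f.
have [->|[x xT]] := set_0Vmem T.
  case: base => f [h1 h2 h3]; exists f; split => //; lia.
have nP : forall V, V \in T -> V != P by move=> V VT; apply: contraNneq PT => <-.
have [Q QT Qmax] := @argmx _ T (fun V => #|cls T V|) x xT.
have [U0|[y yU]] := set_0Vmem (T :\: cls T Q).
  have TQ : T \subset cls T Q by rewrite -setD_eq0 U0.
  have [l [l2 lQ lP]] := @line1 _ P Q (nP _ QT).
  have hT' : (#|T :\ Q| <= n)%N.
    move: hT; rewrite (cardsD1 Q T) QT; have := subset_leq_card TQ; have := hc _ QT.
    rewrite (cardsD1 Q T) QT /=; lia.
  have clsT : forall T' V, (#|cls T' V| <= #|T'|)%N.
    by move=> T' V; apply: subset_leq_card; apply/subsetP => R; rewrite inE => /andP[].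
  have [|||f [f1 f2 f3]] := IH (T :\ Q).
  - by rewrite !inE negb_and PT orbT.
  - lia.
  - by move=> V VT; apply: leq_trans (clsT _ _) hT'.
  have [fl1 fl2] := mulstep f l n f1 l2 f3 lP.
  exists (f * l); split => // v vT; rewrite mevalM.
  have [->|vQ] := eqVneq v Q; first by rewrite lQ mulr0.
  by rewrite f2 ?mul0r // !inE vQ.
have [R RU Rmax] := @argmx _ (T :\: cls T Q) (fun V => #|cls T V|) y yU.
have RT : R \in T by move: RU; rewrite inE => /andP[].
have dRQ : @dir _ P R != @dir _ P Q by move: RU; rewrite !inE RT andbT.
have RQ : R != Q by apply: contraNneq dRQ => ->.
have dQR : @dir _ P Q != @dir _ P R by rewrite eq_sym.
have [l [l2 lQ lR lP]] := @line2 _ P Q R (nP _ QT) (nP _ RT) dQR.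
have clsS : forall (T1 T2 : {set F * F}) V, T1 \subset T2 -> cls T1 V \subset cls T2 V.
  move=> T1 T2 V /subsetP s; apply/subsetP => W; rewrite !inE => /andP[/s -> ->]; by [].
have clsI : forall V W, @dir _ P V != @dir _ P W -> cls T V :&: cls T W = set0.
  move=> V W dVW; apply/setP => Z; rewrite !inE; apply/negP => /andP[/andP[_ /eqP e1] /andP[_ /eqP e2]].
  by move: dVW; rewrite -e1 -e2 eqxx.
have selfc : forall V, V \in T -> V \in cls T V by move=> V VT; rewrite inE VT eqxx.
have clsTs : forall V, (#|cls T V| <= #|T|)%N.
  by move=> V; apply: subset_leq_card; apply/subsetP => W; rewrite inE => /andP[].
set T' := T :\ Q :\ R.
have cT : #|T| = (#|T'|).+2.
  rewrite (cardsD1 Q T) QT (cardsD1 R (T :\ Q)) !inE RQ RT; by [].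
have [|||f [f1 f2 f3]] := IH T'.
- by rewrite !inE (negbTE PT) !andbF.
- lia.
- move=> V VT'; have VT : V \in T by move: VT'; rewrite !inE => /and3P[].
  have QmaxV := Qmax _ VT; have hcQ := hc _ QT.
  have RQm := Qmax _ RT.
  have sub' : cls T' V \subset cls T V by apply: clsS; apply/subsetP => Z; rewrite !inE => /and3P[].
  have rm : forall W, W \notin T' -> W \in cls T V -> (#|cls T' V| < #|cls T V|)%N.
    move=> W WT' WV; rewrite (cardsD1 W (cls T V)) WV add1n ltnS.
    apply: subset_leq_card; apply/subsetP => Z ZT'; rewrite !inE.
    have := subsetP sub' _ ZT'; rewrite inE => /andP[ZT ZV]; rewrite ZT ZV !andbT.
    apply/eqP => e; move: WT'; rewrite -e; move: ZT'; rewrite inE => /andP[-> _]; by [].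
  have [eQ|nQ'] := eqVneq (@dir _ P V) (@dir _ P Q).
    have QT' : Q \notin T' by rewrite /T' in_setD1 setD11 andbF.
    have QV : Q \in cls T V by rewrite inE QT eQ eqxx.
    move: (rm Q QT' QV) => h; rewrite -ltnS; exact: leq_trans h (leq_trans QmaxV hcQ).
  have VU : V \in T :\: cls T Q by rewrite !inE VT nQ'.
  have RmaxV := Rmax _ VU.
  have [eR|nR'] := eqVneq (@dir _ P V) (@dir _ P R).
    have RT' : R \notin T' by rewrite /T' setD11.
    have RV : R \in cls T V by rewrite inE RT eR eqxx.
    move: (rm R RT' RV) => h; rewrite -ltnS; exact: leq_trans h (leq_trans RmaxV (leq_trans RQm hcQ)).
  have dj : #|cls T V :|: cls T Q :|: cls T R| = (#|cls T V| + #|cls T Q| + #|cls T R|)%N.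
    rewrite cardsU setIUl !clsI ?setU0 ?cards0 ?subn0 ?cardsU ?clsI ?cards0 ?subn0 //.
  have hU : (#|cls T V :|: cls T Q :|: cls T R| <= #|T|)%N.
    apply: subset_leq_card; apply/subsetP => Z; rewrite !inE.
    by case/orP => [/orP[]|] /andP[].
  have h1 := subset_leq_card sub'.
  rewrite dj in hU.
  move: hU h1 RmaxV RQm hT.
  move: #|cls T' V| #|cls T V| #|cls T R| #|cls T Q| #|T| => a b c d e.
  clear; lia.
have [fl1 fl2] := mulstep f l n f1 l2 f3 lP.
exists (f * l); split => // v vT; rewrite mevalM.
have [->|vQ] := eqVneq v Q; first by rewrite lQ mulr0.
have [->|vR] := eqVneq v R; first by rewrite lR mulr0.
by rewrite f2 ?mul0r // !inE vQ vR.
Qed.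
End Sep.

Theorem proposition1 (F : finFieldType) (q rho d a : nat)
  (hq : exists p k : nat, [/\ prime p, (0 < k)%N & q = (p ^ k)%N])
  (hF : #|F| = (q ^ 2)%N)
  (hrho : (rho + q + 2 <= q ^ 2)%N)
  (hd_att : exists c : F * F -> F,
      [/\ in_dual q rho c, exists v, c v != 0 & weight c = d])
  (hd_min : forall c : F * F -> F,
      in_dual q rho c -> (exists v, c v != 0) -> (d <= weight c)%N)
  (hLG : forall f : {mpoly F[2]}, inLG q rho f <->
      exists g h : {mpoly F[2]}, f = g + h * hermH F q /\ (msize g <= d - 1)%N)
  (ha : (a + 3 <= d)%N)
  (c : F * F -> F) (hc : in_dual q rho c) (hw : weight c = (d + a)%N) :
  exists al be ga : F, (al != 0 \/ be != 0) /\
    (d - 1 <= #|supp_on_line c al be ga|)%N.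
Proof.
case: (boolP [exists al, exists be, exists ga,
   ((al != 0) || (be != 0)) && (d - 1 <= #|supp_on_line c al be ga|)%N]).
  case/existsP => al /existsP [be /existsP [ga /andP [h1 h2]]].
  by exists al, be, ga; split => //; apply/orP.
move=> hno; exfalso.
have hline : forall al be ga : F, (al != 0) || (be != 0) ->
    (#|supp_on_line c al be ga| <= d - 2)%N.
  move=> al be ga hab; move/existsPn: hno => /(_ al) /existsPn /(_ be) /existsPn /(_ ga).
  rewrite hab /= -ltnNge; lia.
set S := [set v | c v != 0].
have hS : #|S| = (d + a)%N by rewrite -hw.
have [P PS] : exists P, P \in S.
  apply/set0Pn; rewrite -cards_eq0 hS; lia.
set T := S :\ P.
have PT : P \notin T by rewrite setD11.
have hT : (#|T| <= 2 * (d - 2))%N.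
  move: hS; rewrite (cardsD1 P S) PS -/T; lia.
have hcls : forall Q, Q \in T -> (#|@cls F P T Q| <= d - 2)%N.
  move=> Q QT.
  have QP : Q != P by apply: contraNneq PT => <-.
  set al := (@dir _ P Q).2; set be := - (@dir _ P Q).1.
  set ga := - (al * P.1 + be * P.2).
  have hab : (al != 0) || (be != 0).
    rewrite /al /be /dir; case: ifP => _ /=; by rewrite ?oner_eq0 ?oppr_eq0 ?oner_eq0 ?orbT.
  have sub : P |: @cls F P T Q \subset supp_on_line c al be ga.
    apply/subsetP => R; rewrite !inE => /orP [/eqP ->|/andP [RT /eqP eR]].
      rewrite -(in_set (fun v => c v != 0)) -/S PS /=; apply/eqP; rewrite /ga; ring.
    case/andP: RT => RP cR; rewrite cR /=; apply/eqP.
    have [l l0 [e1 e2]] := @dirP _ P R RP.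
    have -> : al * R.1 + be * R.2 + ga = al * (R.1 - P.1) + be * (R.2 - P.2) by rewrite /ga; ring.
    rewrite e1 e2 eR /al /be; ring.
  have PnC : P \notin @cls F P T Q by rewrite inE (negbTE PT).
  have := subset_leq_card sub; rewrite cardsU1 PnC add1n.
  move=> h; have h2 := hline _ _ ga hab; exact: leq_trans (ltnW h) h2.
have [f [f1 f2 f3]] := @sep F P (d - 2) T PT hT hcls.
have inf : inLG q rho f.
  apply/hLG; exists f, 0; rewrite mul0r addr0; split => //; lia.
have := (proj2 hc) f inf.
have PX : onX q P.
  apply: contraTT PS => nX; rewrite inE (proj1 hc P nX) eqxx; by [].
rewrite (bigD1 P) //= big1 ?addr0.
  by move=> /eqP; rewrite mulf_eq0 (negbTE f3) orbF; move: PS; rewrite inE => /negbTE ->.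
move=> v /andP [_ vP].
have [->|cv] := eqVneq (c v) 0; first by rewrite mul0r.
by rewrite f2 ?mulr0 // !inE vP cv.
Qed.
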